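(* For every positive integer $n$, the set $[n]=\{1,\dots,n\}$ admits exactly one $2$-good partition.
   Context: For integers $n>0$ and $m>1$, a partition of $[n]=\{1,\dots,n\}$ into nonempty parts is called $m$-good if every part has at most $m$ elements and the sum of the elements of every part is a power of $m$, i.e. equals $m^s$ for some integer $s\ge 0$. Thus a $2$-good partition is a partition of $[n]$ into parts of size $1$ or $2$, each with sum a power of $2$. *)

(* Defs.v *)
From mathcomp Require Import all_boot.
Set Implicit Arguments. Unset Strict Implicit. Unset Printing Implicit Defensive.

(* The ground set [n] = {1,...,n}, realised inside the finite type 'I_n.+1
   (whose elements are 0..n) as the elements with positive value. *)
Definition ground (n : nat) : {set 'I_n.+1} := [set i : 'I_n.+1 | 0 < val i].

(* P is an m-good partition of [n]: P is a partition of [n] into nonempty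
   parts (finset's [partition], which excludes the empty block), each part has
   at most m elements, and the sum of the elements of each part is m^s. *)
Definition good_partition (m n : nat) (P : {set {set 'I_n.+1}}) : Prop :=
  partition P (ground n) /\
  forall B, B \in P -> #|B| <= m /\ exists s : nat, \sum_(i in B) val i = m ^ s.
Arguments good_partition m n P : clear implicits.

(* Main.v *)
Require Import Defs.
From mathcomp Require Import all_boot zify.
Set Implicit Arguments. Unset Strict Implicit.


Definition pow2 m := exists s, m = 2 ^ s.

Fixpoint cp (fuel t x : nat) : nat :=
  match fuel with
  | 0 => x
  | f.+1 => let h := 2 ^ trunc_log 2 t in
            if 2 * h - t <= x then 2 * h - x else cp f (2 * h - t).-1 x
  end.

Lemma hbounds t : 0 < t -> 2 ^ trunc_log 2 t <= t < 2 * 2 ^ trunc_log 2 t.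
Proof.
move=> t0; rewrite trunc_logP // /=.
by have := trunc_log_ltn t (isT : 1 < 2); rewrite expnS.
Qed.

Lemma pow2_eq k m : pow2 m -> 2 ^ k < m -> m < 4 * 2 ^ k -> m = 2 * 2 ^ k.
Proof.
case=> s -> h1 h2.
have e4 : 4 * 2 ^ k = 2 ^ k.+2 by rewrite !expnS mulnA.
have e2 : 2 * 2 ^ k = 2 ^ k.+1 by rewrite expnS.
rewrite e4 ltn_exp2l // in h2; rewrite ltn_exp2l // in h1.
by rewrite e2; have -> : s = k.+1 by lia.
Qed.

Lemma cp_spec fuel : forall t x, t <= fuel -> 0 < x <= t ->
  [/\ 0 < cp fuel t x <= t, cp fuel t (cp fuel t x) = x & pow2 (x + cp fuel t x)].
Proof.
elim: fuel => [|f IH] t x tf xt /=; first by lia.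
have t0 : 0 < t by lia.
have := hbounds t0; set h := 2 ^ trunc_log 2 t => hb.
case: ifP => ax.
  have ax' : 2 * h - t <= 2 * h - x by lia.
  rewrite ax'; split; [lia | lia | exists (trunc_log 2 t).+1].
  by rewrite expnS -/h; lia.
have [H1 H2 H3] := IH (2 * h - t).-1 x ((ltac:(lia)) : (2 * h - t).-1 <= f) ltac:(lia).
have -> : (2 * h - t <= cp f (2 * h - t).-1 x) = false by lia.
split => //; lia.
Qed.

Lemma cp_uniq fuel : forall t (g : nat -> nat), t <= fuel ->
  (forall x, 0 < x <= t -> [/\ 0 < g x <= t, g (g x) = x & pow2 (x + g x)]) ->
  forall x, 0 < x <= t -> g x = cp fuel t x.
Proof.
elim: fuel => [|f IH] t g tf Hg x xt /=; first by lia.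
have t0 : 0 < t by lia.
have := hbounds t0; set h := 2 ^ trunc_log 2 t => hb.
have big : forall y, h <= y <= t -> g y = 2 * h - y.
  move=> y yt; have [G1 _ G3] := Hg y ltac:(lia).
  have := @pow2_eq (trunc_log 2 t) _ G3 ltac:(lia) ltac:(lia); rewrite -/h; lia.
have mid : forall y, 2 * h - t <= y <= t -> g y = 2 * h - y.
  move=> y yt; case: (leqP h y) => hy; first by apply: big; lia.
  have [_ G2 _] := Hg y ltac:(lia).
  have := big (2 * h - y) ltac:(lia).
  have -> : 2 * h - (2 * h - y) = y by lia.
  move=> e; have [_ G2' _] := Hg (2 * h - y) ltac:(lia).
  by rewrite -{1}e G2'.
case: ifP => ax; first by apply: mid; lia.
apply: IH; [lia | | lia].
move=> z zt; have [G1 G2 G3] := Hg z ltac:(lia).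
split => //; apply/andP; split; first lia.
case: (leqP (2 * h - t) (g z)) => // gz.
have := mid (g z) ltac:(lia); rewrite G2; lia.
lia.
Qed.

Section Main.
Variable n : nat.
Local Notation D := (ground n).
Local Notation c v := (cp n n v).

Lemma inD (x : 'I_n.+1) : (x \in D) = (0 < val x).
Proof. by rewrite inE. Qed.

Lemma pow2_half v : 0 < v -> pow2 (v + v) -> exists s, v = 2 ^ s.
Proof. move=> v0 [[|s] e]; first by rewrite expn0 in e; lia.
by exists s; rewrite expnS in e; lia. Qed.

Definition R : rel 'I_n.+1 := fun x y => (y == x) || (val y == c (val x)).

Lemma cspec (x : 'I_n.+1) : x \in D ->
  [/\ 0 < c (val x) <= n, c (c (val x)) = val x & pow2 (val x + c (val x))].
Proof. rewrite inD => x0; apply: cp_spec => //; rewrite x0 -ltnS; exact: ltn_ord. Qed.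

Lemma eqiR : {in D & &, equivalence_rel R}.
Proof.
move=> x y z Dx Dy Dz; split; first by rewrite /R eqxx.
rewrite /R; case/orP => [/eqP -> // | /eqP e].
have [_ C2 _] := cspec Dx.
rewrite -!val_eqE /= e C2.
by case: (val z == val x); case: (val z == c (val x)).
Qed.

Definition P0 := equivalence_partition R D.

Lemma blockR (x : 'I_n.+1) : x \in D ->
  [set y in D | R x y] = [set x; inord (c (val x))].
Proof.
move=> Dx; have [C1 _ _] := cspec Dx.
have eW : val (inord (c (val x)) : 'I_n.+1) = c (val x) by rewrite /= inordK // ltnS; case/andP: C1.
apply/setP => y; rewrite !inE /R -(val_eqE y (inord _)) eW.
case: eqP => [-> | _] /=; first by rewrite -inD Dx.
case: eqP => [e | _]; last by rewrite andbF.
by rewrite e andbT; case/andP: C1.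
Qed.

Lemma P0good : good_partition 2 n P0.
Proof.
split; first exact: equivalence_partitionP eqiR.
move=> B /imsetP [x Dx ->]; rewrite blockR //; split; first by rewrite cards2; case: (_ != _).
have [C1 C2 C3] := cspec Dx.
have eW : val (inord (c (val x)) : 'I_n.+1) = c (val x) by rewrite /= inordK // ltnS; case/andP: C1.
case: (eqVneq x (inord (c (val x)))) => [e | ne].
  rewrite -e setUid big_set1; apply: pow2_half; first by rewrite -inD.
  by have := congr1 val e; rewrite eW => h; rewrite {2}h.
rewrite (big_setU1 (x : 'I_n.+1)) ?inE //= big_set1 eW; exact: C3.
Qed.

Section Uniq.
Variable P : {set {set 'I_n.+1}}.
Hypothesis goodP : good_partition 2 n P.

Let partP : partition P D := goodP.1.
Let tiP : trivIset P. Proof. by case/and3P: partP. Qed.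
Let covP : cover P = D. Proof. by case/and3P: partP => /eqP. Qed.

Definition other (x : 'I_n.+1) := odflt x [pick y in pblock P x | y != x].

Lemma inblockD x y : y \in pblock P x -> y \in D.
Proof. move=> yB; rewrite -covP -mem_pblock (same_pblock tiP yB) //. Qed.

Lemma blockE x : x \in D -> pblock P x = [set x; other x].
Proof.
move=> Dx; have Bx : x \in pblock P x by rewrite mem_pblock covP.
have BP : pblock P x \in P by apply: pblock_mem; rewrite covP.
have [card2 _] := goodP.2 _ BP.
rewrite /other; case: pickP => [y /andP [yB ne] | none] /=.
  apply/esym/eqP; rewrite eqEcard cards2 eq_sym ne.
  have -> : [set x; y] \subset pblock P x.
    by apply/subsetP => z; rewrite !inE => /orP [] /eqP ->.
  done.
rewrite setUid; apply/setP => z; rewrite inE.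
case: eqP => [-> // | /eqP nz]; have := none z; rewrite nz andbT => /negbT.
by move/negbTE.
Qed.

Lemma otherD x : x \in D -> other x \in D.
Proof. by move=> Dx; apply: (@inblockD x); rewrite blockE // !inE eqxx orbT. Qed.

Lemma other_eq x y : x \in D -> y \in pblock P x -> y != x -> other x = y.
Proof.
move=> Dx; rewrite blockE // !inE => /orP [/eqP -> | /eqP -> //]; by rewrite eqxx.
Qed.

Lemma otherK x : x \in D -> other (other x) = x.
Proof.
move=> Dx; case: (eqVneq (other x) x) => [e | ne]; first by rewrite !e.
have oB : other x \in pblock P x by rewrite blockE // !inE eqxx orbT.
apply: other_eq; first exact: otherD.
  by rewrite (same_pblock tiP oB) mem_pblock covP.
by rewrite eq_sym.
Qed.

Definition g (v : nat) : nat := val (other (inord v)).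

Lemma gval x : g (val x) = val (other x).
Proof. by rewrite /g inord_val. Qed.

Lemma Hg v : 0 < v <= n -> [/\ 0 < g v <= n, g (g v) = v & pow2 (v + g v)].
Proof.
case/andP=> v0 vn.
have vX : val (inord v : 'I_n.+1) = v by rewrite /= inordK.
set X : 'I_n.+1 := inord v in vX *.
have DX : X \in D by rewrite inD vX.
have eg : g v = val (other X) by [].
have DO := otherD DX.
split.
- rewrite eg -(inD (other X)) DO /= -ltnS; exact: ltn_ord.
- by rewrite eg gval otherK.
- have BP : pblock P X \in P by apply: pblock_mem; rewrite covP.
  have [_ [s Hs]] := goodP.2 _ BP.
  move: Hs; rewrite blockE // eg.
  case: (eqVneq (other X) X) => [e | ne].
    rewrite e setUid big_set1 vX => ->; exists s.+1; rewrite expnS; lia.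
  rewrite (big_setU1 X) ?inE 1?eq_sym // big_set1 vX => h; by exists s.
Qed.

Lemma P_eq : P = P0.
Proof.
rewrite -(equivalence_partition_pblock partP) /P0 /equivalence_partition.
apply: eq_in_imset => x Dx; apply/setP => y; rewrite [in LHS]inE [in RHS]inE.
case Dy: (y \in D) => //=.
rewrite blockE // !inE /R -(val_eqE y (other x)) -gval.
rewrite (@cp_uniq n n g (leqnn n) Hg (val x)) //.
apply/andP; split; [by rewrite -inD | rewrite -ltnS; exact: ltn_ord].
Qed.

End Uniq.
End Main.

Theorem mainTheorem3 (n : nat) (hn : 0 < n) :
  exists! P : {set {set 'I_n.+1}}, good_partition 2 n P.
Proof.
exists (P0 n); split; first exact: P0good.
by move=> P gP; rewrite (P_eq gP).
Qed.
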